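(* Assume the following hypothesis: for every $\varepsilon>0$ there is a constant $c_\varepsilon>0$ such that for all sufficiently large real $x$, $$\Psi(x+x^{\varepsilon},x^{\varepsilon})-\Psi(x,x^{\varepsilon})\ge c_\varepsilon x^{\varepsilon}.$$ Then for every $\varepsilon>0$ we have $g(n)<n^{\varepsilon}$ for all sufficiently large integers $n$.
   Context: For real $x,y$, $\Psi(x,y)$ denotes the number of positive integers $\le x$ all of whose prime factors are $\le y$. For integers $n>1$ and $k\ge 1$, say that $(n,k)$ has a prime representation if there are distinct primes $P_1,\dots,P_k$ with $P_j\mid (n+j)$ for $1\le j\le k$. Define $g(n)$ to be the largest positive integer $k$ such that $(n,k)$ has a prime representation. *)

(* Defs.v *)
From Stdlib Require Import Reals.
From mathcomp Require Import all_boot.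

Definition smooth (y : R) (n : nat) : bool :=
  all (fun p => if Rle_dec (INR p) y then true else false) (primes n).

(* Psi x y = #{ n : 1 <= n <= x, n y-smooth }.  Every positive integer n <= x
   is < up x <= Z.to_nat (up x), so iota 1 (Z.to_nat (up x)) covers them. *)
Definition Psi (x y : R) : nat :=
  count (fun n => (if Rle_dec (INR n) x then true else false) && smooth y n)
        (iota 1 (Z.to_nat (up x))).

Definition prime_rep (n k : nat) : Prop :=
  (1 < n)%N /\ (1 <= k)%N /\
  exists P : nat -> nat,
    (forall j, (1 <= j <= k)%N -> prime (P j) /\ (P j %| n + j)%N) /\
    (forall i j, (1 <= i <= k)%N -> (1 <= j <= k)%N -> P i = P j -> i = j).

(* Main.v *)
Require Import Defs.
From Stdlib Require Import Reals Lra Lia ZArith.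
From mathcomp Require Import all_boot zify.
Local Open Scope R_scope.

Lemma count_iota_mono (p : pred nat) a N M : (N <= M)%N ->
  (count p (iota a N) <= count p (iota a M))%N.
Proof.
move=> NM; rewrite -(subnKC NM) iotaD count_cat; exact: leq_addr.
Qed.

Lemma count_zero (p : pred nat) s : (forall x, x \in s -> ~~ p x) -> count p s = 0%N.
Proof.
move=> H; rewrite (eq_in_count (a2 := pred0)); first exact: count_pred0.
by move=> x /H /negbTE.
Qed.

Lemma count_trunc (q : pred nat) (a : R) N M :
  (forall t, (M < t)%N -> (a < INR t)) ->
  (count (fun t => (if Rle_dec (INR t) a then true else false) && q t) (iota 1 N)
     <= count q (iota 1 M))%N.
Proof.
move=> Ht.
have H1 : forall K, (count (fun t => (if Rle_dec (INR t) a then true else false) && q t) (iota 1 K)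
     <= count q (iota 1 K))%N.
  move=> K; apply: sub_count => t /andP[_ ->] //.
case: (leqP N M) => NM.
  apply: leq_trans (H1 N) _; exact: count_iota_mono.
rewrite -(subnKC (ltnW NM)) iotaD count_cat.
rewrite (@count_zero _ (iota (1 + M) (N - M))); first by rewrite addn0 H1.
move=> x; rewrite mem_iota => /andP[h _].
have := Ht x ltac:(lia).
by case: Rle_dec => // r; lra.
Qed.

Lemma up_nat_ge (x : nat) : (x < Z.to_nat (up (INR x)))%N.
Proof.
have [h _] := archimed (INR x).
rewrite INR_IZR_INZ in h *. apply lt_IZR in h. apply/ltP. lia.
Qed.

Lemma psi_lower (x : nat) y : (count (smooth y) (iota 1 x) <= Psi (INR x) y)%N.
Proof.
rewrite /Psi.
apply: (leq_trans _ (count_iota_mono _ 1 _ _ (ltnW (up_nat_ge x)))).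
rewrite leq_eqVlt; apply/orP; left; apply/eqP.
apply: eq_in_count => t; rewrite mem_iota => /andP[_ h].
case: Rle_dec => // n; exfalso; apply: n; apply: le_INR; apply/leP. lia.
Qed.

Lemma psi_upper a y (M : nat) : (forall t, (M < t)%N -> (a < INR t)) ->
  (Psi a y <= count (smooth y) (iota 1 M))%N.
Proof. move=> H; exact: count_trunc. Qed.

Lemma window (x L : nat) y : 0 <= y -> y < INR L ->
  INR (Psi (INR x + y) y) - INR (Psi (INR x) y) <= INR (count (smooth y) (iota (x+1) L)).
Proof.
move=> y0 yL.
have h1 := psi_lower x y.
have h2 : (Psi (INR x + y) y <= count (smooth y) (iota 1 (x + L)))%N.
  apply: psi_upper => t ht.
  have : INR (x + L + 1) <= INR t by apply: le_INR; apply/leP; lia.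
  rewrite !plus_INR /=. lra.
rewrite iotaD count_cat add1n in h2.
suff : INR (Psi (INR x + y) y) <= INR (Psi (INR x) y) + INR (count (smooth y) (iota (x + 1) L)) by lra.
rewrite -plus_INR; apply: le_INR; apply/leP.
move/leP: h1; move/leP: h2. rewrite addnC. rewrite addn1. lia.
Qed.

Lemma smooth_mono y B t : y <= B -> smooth y t -> smooth B t.
Proof.
move=> yB; rewrite /smooth; apply: sub_all => p /=.
case: Rle_dec => // h _; case: Rle_dec => // h'; exfalso; lra.
Qed.

Lemma lt_up_nat (p : nat) B : INR p <= B -> (p < Z.to_nat (up B))%N.
Proof.
move=> h; have [h1 _] := archimed B.
have h2 : INR p < IZR (up B) by lra.
rewrite INR_IZR_INZ in h2; apply lt_IZR in h2; apply/ltP; lia.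
Qed.

Lemma comb n k K (P : nat -> nat) B : (K <= k)%N ->
 (forall j, (1 <= j <= k)%N -> prime (P j) /\ (P j %| n + j)%N) ->
 (forall i j, (1<=i<=k)%N -> (1<=j<=k)%N -> P i = P j -> i = j) ->
 (count (smooth B) (iota n.+1 K) <= Z.to_nat (up B))%N.
Proof.
move=> Kk HP Hinj.
rewrite -size_filter.
set s := filter _ _.
have mem_s : forall t, t \in s -> [/\ (n < t)%N, (t <= n + K)%N & smooth B t].
  move=> t; rewrite mem_filter mem_iota => /andP[sm /andP[a b]].
  split => //; lia.
have us : uniq (map (fun t => P (t - n)%N) s).
  rewrite map_inj_in_uniq; first by rewrite filter_uniq // iota_uniq.
  move=> t1 t2 /mem_s [a1 b1 _] /mem_s [a2 b2 _] e.
  have := Hinj (t1 - n)%N (t2 - n)%N ltac:(lia) ltac:(lia) e. lia.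
rewrite -(size_map (fun t => P (t - n)%N)).
rewrite -(size_iota 0 (Z.to_nat (up B))).
apply: uniq_leq_size => // q /mapP [t /mem_s [a b sm] ->].
have [pr dv] := HP (t - n)%N ltac:(lia).
have e : (n + (t - n) = t)%N by lia.
rewrite e in dv.
have : P (t - n)%N \in primes t by rewrite mem_primes pr dv andbT; lia.
move: sm; rewrite /smooth => /allP H /H.
case: Rle_dec => // hl _.
rewrite mem_iota add0n; apply/andP; split => //.
exact: lt_up_nat.
Qed.

Lemma many_windows (B a : R) (n L m : nat) :
  (forall i, (i < m)%N -> a <= INR (count (smooth B) (iota (n + i * L + 1) L))) ->
  INR m * a <= INR (count (smooth B) (iota n.+1 (m * L))).
Proof.
elim: m => [|m IH] H.
  rewrite /=; lra.
rewrite mulSnr iotaD count_cat plus_INR S_INR.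
have h1 := IH (fun i hi => H i (leq_trans hi (leqnSn m))).
have h2 := H m (leqnn _).
have e : (n + m * L + 1 = n.+1 + m * L)%N by lia.
rewrite e in h2. lra.
Qed.

Lemma INR_to_nat z : (0 <= z)%Z -> INR (Z.to_nat z) = IZR z.
Proof. move=> h; rewrite INR_IZR_INZ Z2Nat.id //. Qed.

Lemma up_pos r : 0 <= r -> (0 <= up r)%Z.
Proof. move=> h; have [h1 _] := archimed r. apply: le_IZR. lra. Qed.

Lemma Rpower_pos x y : 0 < Rpower x y.
Proof. rewrite /Rpower; exact: exp_pos. Qed.

Theorem theorem1p2 :
  (forall eps : R, (0 < eps) ->
     exists c : R, (0 < c) /\ exists X : R, forall x : R, (X <= x) ->
       (INR (Psi (x + Rpower x eps) (Rpower x eps)) - INR (Psi x (Rpower x eps))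
          >= c * Rpower x eps))  ->
  forall eps : R, (0 < eps) ->
    exists N : nat, forall n : nat, (N <= n)%N ->
      forall k : nat, prime_rep n k -> (INR k < Rpower (INR n) eps).
Proof.
move=> Hyp eps heps.
set d := Rmin eps 1 / 2.
have hd0 : 0 < d by rewrite /d; have := Rmin_glb_lt eps 1 0 heps ltac:(lra); lra.
have hd1 : 2 * d <= 1 by rewrite /d; have := Rmin_r eps 1; lra.
have hde : 2 * d <= eps by rewrite /d; have := Rmin_l eps 1; lra.
have [c [hc [X HX]]] := Hyp d hd0.
set T := Rpower 2 d.
have hT : 0 < T := Rpower_pos _ _.
set m := Z.to_nat (up ((T + 3) / c)).
have hm : T + 3 <= INR m * c.
  have hpos : 0 <= (T + 3) / c by apply: Rlt_le; apply: Rdiv_lt_0_compat; lra.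
  rewrite /m INR_to_nat; last exact: up_pos.
  have [h1 _] := archimed ((T + 3) / c).
  have : (T + 3) / c * c <= IZR (up ((T + 3) / c)) * c by apply: Rmult_le_compat_r; lra.
  have -> : (T + 3) / c * c = T + 3 by field; lra.
  done.
have hm0 : 0 <= INR m := pos_INR m.
set A := INR m * T + INR m + 1.
have hA : 0 < A by rewrite /A; nra.
set M0 := Rmax X (Rmax 2 (Rpower A (1 / d))).
exists (Z.to_nat (up M0)) => n hn k [hn1 [hk1 [P [HP Hinj]]]].
set nr := INR n.
have hnM : M0 <= nr.
  have [h1 _] := archimed M0.
  have : INR (Z.to_nat (up M0)) <= nr by apply: le_INR; apply/leP.
  rewrite INR_to_nat; first lra.
  apply: up_pos; rewrite /M0; have := Rmax_r X (Rmax 2 (Rpower A (1 / d))); have := Rmax_l 2 (Rpower A (1 / d)); lra.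
rewrite /M0 in hnM.
have hXn : X <= nr by have := Rmax_l X (Rmax 2 (Rpower A (1 / d))); lra.
have h2n : 2 <= nr by have := Rmax_r X (Rmax 2 (Rpower A (1 / d))); have := Rmax_l 2 (Rpower A (1 / d)); lra.
have hAn : Rpower A (1 / d) <= nr by have := Rmax_r X (Rmax 2 (Rpower A (1 / d))); have := Rmax_r 2 (Rpower A (1 / d)); lra.
destruct (Rlt_le_dec (INR k) (Rpower nr eps)) as [done|hk]; first exact: done.
exfalso.
set nd := Rpower nr d.
have hnd1 : 1 <= nd.
  rewrite /nd -(Rpower_O nr); last lra.
  apply: Rle_Rpower; lra.
have hndA : A <= nd.
  have -> : A = Rpower (Rpower A (1 / d)) d.
    rewrite Rpower_mult. have -> : 1 / d * d = 1 by field; lra.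
    by rewrite Rpower_1.
  apply: Rle_Rpower_l; first lra. split; [exact: Rpower_pos | done].
have hn2d : nd * nd = Rpower nr (2 * d) by rewrite /nd -Rpower_plus; congr Rpower; lra.
have heps2 : Rpower nr (2 * d) <= Rpower nr eps by apply: Rle_Rpower; lra.
have hnn : Rpower nr (2 * d) <= nr.
  rewrite -{2}(Rpower_1 nr); last lra. apply: Rle_Rpower; lra.
set B := Rpower (2 * nr) d.
have hB : B = T * nd by rewrite /B /T /nd Rpower_mult_distr //; lra.
set L := Z.to_nat (up B).
have hBpos : 0 <= B by have := Rpower_pos (2 * nr) d; rewrite /B; lra.
have [hL1 hL2] : B < INR L /\ INR L <= B + 1.
  rewrite /L INR_to_nat; last exact: up_pos.
  have [h1 h2] := archimed B; lra.
have hmL : INR (m * L) <= nd * nd.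
  rewrite mult_INR.
  have : INR m * INR L <= INR m * (B + 1) by apply: Rmult_le_compat_l.
  rewrite hB. move: hm0 hnd1 hndA hT; rewrite /A; nra.
have hmLk : (m * L <= k)%N by apply/leP; apply: INR_le; lra.
have hmLn : (m * L <= n)%N by apply/leP; apply: INR_le; rewrite -/nr; lra.
have Hw : forall i, (i < m)%N -> c * nd <= INR (count (smooth B) (iota (n + i * L + 1) L)).
  move=> i hi.
  set xi := (n + i * L)%N.
  have hxi1 : nr <= INR xi by apply: le_INR; apply/leP; rewrite /xi; lia.
  have hxi2 : INR xi <= 2 * nr.
    have hiL : (i * L <= m * L)%N by rewrite leq_mul2r ltnW ?orbT.
    have : INR xi <= INR (n + n) by apply: le_INR; apply/leP; rewrite /xi; lia.
    have e2 : INR (n + n) = 2 * nr by rewrite plus_INR /nr; ring.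
    lra.
  set y := Rpower (INR xi) d.
  have hy0 : 0 <= y by have := Rpower_pos (INR xi) d; rewrite /y; lra.
  have hyB : y <= B by apply: Rle_Rpower_l; lra.
  have hndy : nd <= y by apply: Rle_Rpower_l; lra.
  have h1 := HX (INR xi) ltac:(lra).
  have h2 := window xi L y hy0 ltac:(lra).
  have h3 : (count (smooth y) (iota (xi + 1) L) <= count (smooth B) (iota (xi + 1) L))%N.
    apply: sub_count => t; exact: smooth_mono.
  have h4 := le_INR _ _ (elimT leP h3) .
  rewrite -/y in h1. nra.
have Hsum := many_windows B (c * nd) n L m Hw.
have Hc := comb n k (m * L) P B hmLk HP Hinj.
have Hc' := le_INR _ _ (elimT leP Hc).
rewrite -/L in Hc'.
have : (T + 3) * nd <= INR m * c * nd by apply: Rmult_le_compat_r; lra.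
move: Hsum Hc' hL2 hB hnd1; nra.
Qed.
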